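(* Let $Q^\star$ and $Q$ be two SPJ queries over the same schema. Suppose no database constraints are present, and suppose there exists some database instance $D$ on which $Q^\star$ or $Q$ returns a non-empty result. If $Q^\star$ and $Q$ are equivalent under bag semantics, then $\mathrm{Tables}(Q^\star)=\mathrm{Tables}(Q)$ as multisets. Equivalently, if $\mathrm{Tables}(Q^\star)\neq\mathrm{Tables}(Q)$ as multisets, then $Q^\star$ and $Q$ are not equivalent under bag semantics.
   Context: A database instance assigns to each table name of the schema a finite multiset (bag) of tuples over that table's columns. ''No database constraints'' means every such assignment is a legal instance. An SPJ query is a single-block SQL query of the form SELECT $e_1,\dots,e_k$ FROM $T_1$ AS $a_1$, …, $T_m$ AS $a_m$ WHERE $P$, with $m\ge 1$, where: - $a_1,\dots,a_m$ are distinct aliases, and the same table may occur several times (self-joins); - $P$ is a quantifier-free predicate over column references; - $e_1,\dots,e_k$ are scalar expressions over column references; - there is no GROUP BY, no aggregation, no HAVING and no DISTINCT. Under bag semantics the result of such a query is the following multiset: for every tuple of the bag cross product $T_1\times\dots\times T_m$ (multiplicities multiply) that satisfies $P$, the row $(e_1,\dots,e_k)$ evaluated on that tuple. $\mathrm{Tables}(Q)$ denotes the multiset $\{T_1,\dots,T_m\}$ of tables in the FROM clause of $Q$, counted with multiplicity. Two queries are equivalent under bag semantics if on every database instance they return the same multiset of result rows. *)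

(* Defs.v *)
From mathcomp Require Import all_boot.
Set Implicit Arguments. Unset Strict Implicit. Unset Printing Implicit Defensive.

(* A schema: a finite type of table names [Tab], each table [t] having
   [arity t] columns.  Values range over an arbitrary type [V] with decidable
   equality (needed to compare result rows). *)

Definition row_of (Tab : Type) (arity : Tab -> nat) (V : Type) (t : Tab) :=
  'I_(arity t) -> V.

(* A database instance: each table name is mapped to a finite bag of tuples,
   represented as a list (order irrelevant; multiplicity = number of
   occurrences).  With no constraints, every such assignment is legal. *)
Definition instance (Tab : Type) (arity : Tab -> nat) (V : Type) :=
  forall t : Tab, seq (row_of arity V t).

(* An SPJ query  SELECT e_1..e_k FROM T_1 AS a_1, ..., T_m AS a_m WHERE P.
   Aliases are the positions i : 'I_m (hence distinct); the same table may
   occur several times.  A column reference is a pair (alias i, column j of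
   table T_i); an assignment of values to all column references is an
   environment [env].  The predicate P and the scalar expressions e_l are
   (semantically) functions of the column references. *)
Record SPJ (Tab : Type) (arity : Tab -> nat) (V : Type) := {
  nfrom : nat;
  nfrom_pos : 0 < nfrom;
  from : 'I_nfrom -> Tab;
  nsel : nat;
  wherep : (forall i : 'I_nfrom, row_of arity V (from i)) -> bool;
  select : 'I_nsel -> (forall i : 'I_nfrom, row_of arity V (from i)) -> V
}.

Arguments from {Tab arity V} s _.
Arguments wherep {Tab arity V} s _.
Arguments select {Tab arity V} s _ _.
Arguments nfrom {Tab arity V} s.
Arguments nsel {Tab arity V} s.

Section Semantics.
Variables (Tab : finType) (arity : Tab -> nat) (V : eqType).

(* Bag semantics: enumerate every tuple of the bag cross product, i.e. every
   choice of one occurrence (an index) in each bag D(T_i); multiplicities thus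
   multiply. *)
Definition choice_env (Q : SPJ arity V) (D : instance arity V)
  (s : {dffun forall i : 'I_(nfrom Q), 'I_(size (D (from Q i)))}) :
  forall i : 'I_(nfrom Q), row_of arity V (from Q i) :=
  fun i => tnth (in_tuple (D (from Q i))) (s i).

Definition eval (Q : SPJ arity V) (D : instance arity V) : seq (seq V) :=
  [seq [seq select Q l (choice_env s) | l <- enum 'I_(nsel Q)]
  | s <- enum {dffun forall i : 'I_(nfrom Q), 'I_(size (D (from Q i)))}
  & wherep Q (choice_env s)].

Definition bag_equiv (Q1 Q2 : SPJ arity V) : Prop :=
  forall D : instance arity V, perm_eq (eval Q1 D) (eval Q2 D).

Definition tables (Q : SPJ arity V) : seq Tab :=
  [seq from Q i | i <- enum 'I_(nfrom Q)].

End Semantics.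

(* Main.v *)
Require Import Defs.
From mathcomp Require Import all_boot.
From Stdlib Require Import FunctionalExtensionality.
Set Implicit Arguments. Unset Strict Implicit. Unset Printing Implicit Defensive.
Lemma card_pre (I : finType) (A B : I -> finType) (g : forall i, B i -> A i) (w : I -> nat)
 (hw : forall i (a : A i), #|[pred b | g i b == a]| = w i) (p : pred {dffun forall i, A i}) :
 #|[pred s' : {dffun forall i, B i} | p (finfun (fun i => g i (s' i)) : {dffun forall i, A i})]|
   = #|p| * foldr muln 1 [seq w i | i : I].
Proof.
pose phi (s' : {dffun forall i, B i}) : {dffun forall i, A i} := finfun (fun i => g i (s' i)).
rewrite -sum1_card (partition_big phi p) //=.
rewrite -sum1_card big_distrl /=; apply: eq_bigr => s ps.
rewrite mul1n.
have -> : foldr muln 1 [seq w i | i : I] = foldr muln 1 [seq #|[pred b | g i b == s i]| | i : I].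
  by congr foldr; apply: eq_map => i; rewrite hw.
rewrite -(card_family (fun i => [pred b | g i b == s i])).
rewrite -sum1_card; apply: eq_bigl => s' /=.
rewrite inE.
have -> : (s' \in family (fun i : I => [pred b | g i b == s i])) = (phi s' == s).
  apply/familyP/eqP => [H | <- i]; last by rewrite /phi ffunE inE.
  apply/ffunP => i; rewrite ffunE; exact/eqP/(H i).
case: eqP => Hs; last by rewrite andbF.
by rewrite andbT; move: Hs; rewrite /phi => ->.
Qed.
Lemma g_lt (T : Type) (b : bool) (s : seq T) (k : 'I_(size (if b then s ++ s else s))) :
  k %% size s < size s.
Proof.
apply: ltn_pmod; have : k < size s + size s.
  case: b k => k; have := ltn_ord k; first by move=> h; rewrite -size_cat.
  by move=> h; apply: (leq_trans h); rewrite leq_addr.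
move: (nat_of_ord k) => x; clear k; case: (size s) => //.
Qed.

Definition gmap (T : Type) (b : bool) (s : seq T) (k : 'I_(size (if b then s ++ s else s))) :
  'I_(size s) := Ordinal (g_lt k).

Lemma gmap_nth (T : Type) (b : bool) (s : seq T) (k : 'I_(size (if b then s ++ s else s))) :
  tnth (in_tuple (if b then s ++ s else s)) k = tnth (in_tuple s) (gmap k).
Proof.
have y : T := tnth (in_tuple s) (gmap k).
rewrite !(tnth_nth y) /=; have := ltn_ord k.
move: (nat_of_ord k) => x; clear k.
case: b => /=.
  rewrite size_cat nth_cat => lt.
  case: ltnP => le.
    by rewrite modn_small.
  have -> : x = (x - size s) + size s by rewrite subnK.
  rewrite modnDr modn_small ?addnK //.
  by rewrite ltn_subLR.
by move=> lt; rewrite modn_small.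
Qed.

Lemma sum_one n (j : 'I_n) :
  \sum_(0 <= i < n) (if i %% n == j then 1 else 0) = 1.
Proof.
rewrite (eq_big_nat _ _ (F2 := fun i => if i == j then 1 else 0)); last first.
  by move=> i /andP[_ lt]; rewrite modn_small.
by rewrite -big_mkcond big_nat1_eq ltn_ord.
Qed.

Lemma gmap_fib (T : Type) (b : bool) (s : seq T) (j : 'I_(size s)) :
  #|[pred k | gmap (b:=b) k == j]| = if b then 2 else 1.
Proof.
rewrite -sum1_card big_mkcond /=.
rewrite (eq_bigr (fun k : 'I_(size (if b then s ++ s else s)) => if (k : nat) %% size s == j then 1 else 0)); last first.
  by move=> k _; rewrite inE.
rewrite -(big_mkord xpredT (fun k => if k %% size s == j then 1 else 0)).
case: b; last exact: sum_one.
rewrite size_cat (big_cat_nat _ (n := size s)) //= ?leq_addr // sum_one.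
rewrite -{1}(add0n (size s)) big_addn addnK.
rewrite (eq_big_nat _ _ (F2 := fun i => if i %% size s == j then 1 else 0)) ?sum_one //.
by move=> i _; rewrite modnDr.
Qed.

Lemma size_eval (Tab : finType) (arity : Tab -> nat) (V : eqType) (Q : SPJ arity V)
  (D : instance arity V) :
  size (eval Q D) = #|[pred s | wherep Q (choice_env (D := D) s)]|.
Proof.
rewrite /eval size_map cardE /enum_mem !size_filter count_filter.
by apply: eq_count => x; rewrite !inE /= andbT.
Qed.

Definition D2 (Tab : finType) (arity : Tab -> nat) (V : eqType) (D : instance arity V)
  (t : Tab) : instance arity V := fun u => if u == t then D u ++ D u else D u.

Lemma foldr_w (I : finType) (f : I -> bool) (r : seq I) :
  foldr muln 1 [seq (if f i then 2 else 1) | i <- r] = 2 ^ count f r.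
Proof. by elim: r => //= i r ->; case: (f i); rewrite ?expnS ?mul1n. Qed.

Lemma cnt_D2 (Tab : finType) (arity : Tab -> nat) (V : eqType) (Q : SPJ arity V)
  (D : instance arity V) (t : Tab) :
  size (eval Q (D2 D t)) = size (eval Q D) * 2 ^ count (pred1 t) (tables Q).
Proof.
rewrite !size_eval.
pose A := fun i : 'I_(nfrom Q) => 'I_(size (D (from Q i))).
pose B := fun i : 'I_(nfrom Q) => 'I_(size (D2 D t (from Q i))).
pose g := fun i (k : B i) => @gmap _ (from Q i == t) (D (from Q i)) k : A i.
have -> : #|[pred s | wherep Q (choice_env (D := D2 D t) s)]| =
  #|[pred s' : {dffun forall i, B i} |
     [pred s | wherep Q (choice_env (D := D) s)] (finfun (fun i => g i (s' i)) : {dffun forall i, A i})]|.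
  apply: eq_card => s'; rewrite !inE /=; congr (wherep Q _).
  apply: functional_extensionality_dep => i; rewrite /choice_env ffunE.
  exact: gmap_nth.
rewrite (@card_pre _ A B g (fun i => if from Q i == t then 2 else 1)); last first.
  by move=> i a; exact: gmap_fib.
have E : count (pred1 t) (tables Q) = count (fun i => from Q i == t) (enum (ordinal (nfrom Q))) by rewrite /tables count_map.
by rewrite foldr_w E enumT.
Qed.

Theorem mainTheorem1 (Tab : finType) (arity : Tab -> nat) (V : eqType)
  (Qstar Q : SPJ arity V) :
  (exists D : instance arity V, eval Qstar D != [::] \/ eval Q D != [::]) ->
  bag_equiv Qstar Q ->
  perm_eq (tables Qstar) (tables Q).
Proof.
move=> [D HD] Heq.
have e0 := perm_size (Heq D).
have pos : 0 < size (eval Qstar D).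
  by case: HD; rewrite -?size_eq0 -?lt0n ?e0.
apply/allP => t _ /=.
have h := perm_size (Heq (D2 D t)).
rewrite !cnt_D2 -e0 in h.
move/eqP: h; rewrite eqn_pmul2l // eqn_exp2l //.
Qed.
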